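(* Let $1/n\ll \beta \ll\xi, \mu$. Let $K_{2n+1}$ be 2-factorized. Suppose that $V_0\subseteq V(K_{2n+1})$ and $D_0\subseteq C(K_{2n+1})$ are $\mu$-random subsets which are independent of each other. Then, with high probability, the following holds. Let $C,\bar{C}\subseteq C(K_{2n+1})$ and $X,\bar{V},Z\subseteq V(K_{2n+1})$ satisfy $|\bar{C}|,|\bar{V}|\leq \beta n$ and $|C|\leq 100$, and suppose that $X,Z$ are disjoint and $(X,Z)$ is $(\xi n)$-replete. Then there are sets $X'\subseteq X\setminus \bar{V}$, $C'\subseteq D_0\setminus \bar{C}$ and $V'\subseteq (V_0\cup Z)\setminus \bar{V}$ with $|X'|=|C|$, $|C'|=|C|-1$ and $|V'|\leq 3|C|$ such that, for every $c\in C$, there is a perfect $(C'\cup \{c\})$-rainbow matching from $X'$ to $V'$.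
   Context: A 2-factorization of $K_{2n+1}$ is an edge-colouring in which every vertex is incident to exactly 2 edges of each colour; $C(K_{2n+1})$ is its colour set. A $q$-random subset contains each element independently with probability $q$. For disjoint $W,Y$, $(W,Y)$ is $\ell$-replete if for every colour at least $\ell$ edges of that colour join $W$ to $Y$. A perfect $D$-rainbow matching from $X'$ to $V'$ is a matching covering every vertex of $X'$, each edge joining $X'$ to $V'$, with distinct colours all in $D$. ''With high probability'': probability $1-o(1)$ as $n\to\infty$. $a\ll b,c$ means the statement holds whenever $a\le \min(b,c)^K/K$ for a suitable fixed absolute constant $K$; $1/n\ll\cdots$ entails $n$ large. *)

(* Defs.v *)
From HB Require Import structures.
From mathcomp Require Import all_boot all_order all_algebra.
From mathcomp Require Import reals.
Set Implicit Arguments. Unset Strict Implicit. Unset Printing Implicit Defensive.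
Import Order.TTheory GRing.Theory Num.Theory.
Local Open Scope ring_scope.

(* Colours: 'I_n (a 2-factorization of
   K_{2n+1} has exactly n colour classes).  An edge-colouring is a function
   col : V -> V -> 'I_n, only its values on pairs u <> v matter. *)

Definition sym_colouring (V : finType) (k : nat) (col : V -> V -> 'I_k) : Prop :=
  forall u v : V, u != v -> col u v = col v u.

Definition two_factorization (V : finType) (k : nat) (col : V -> V -> 'I_k) : Prop :=
  sym_colouring col /\
  forall (v : V) (c : 'I_k), #|[set u : V | (u != v) && (col v u == c)]| = 2%N.

(* Edges from W to Y are counted as ordered pairs (w,y)
   with w in W, y in Y (for disjoint W, Y each edge is counted once). *)
Definition replete (R : realType) (V : finType) (k : nat) (col : V -> V -> 'I_k)
    (l : R) (W Y : {set V}) : Prop :=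
  forall c : 'I_k,
    l <= (#|[set e : V * V | [&& e.1 \in W, e.2 \in Y, e.1 != e.2 & col e.1 e.2 == c]]|)%:R.

Definition perfect_rainbow_matching (V : finType) (k : nat) (col : V -> V -> 'I_k)
    (D : {set 'I_k}) (X' V' : {set V}) (M : {set V * V}) : Prop :=
  [/\ (forall e, e \in M -> [&& e.1 \in X', e.2 \in V', e.1 != e.2 & col e.1 e.2 \in D]),
      (forall e f, e \in M -> f \in M -> e != f ->
        [disjoint [set e.1; e.2] & [set f.1; f.2]]),
      (forall e f, e \in M -> f \in M -> col e.1 e.2 = col f.1 f.2 -> e = f) &
      forall x, x \in X' -> exists2 e, e \in M & (x == e.1) || (x == e.2)].

Definition has_perfect_rainbow_matching (V : finType) (k : nat) (col : V -> V -> 'I_k)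
    (D : {set 'I_k}) (X' V' : {set V}) : Prop :=
  exists M, perfect_rainbow_matching col D X' V' M.

(* probability that a q-random subset of T equals S *)
Definition rand_weight (R : realType) (T : finType) (q : R) (S : {set T}) : R :=
  \prod_(t : T) (if t \in S then q else 1 - q).

Definition good_event (R : realType) (n : nat) (col : 'I_(2*n+1) -> 'I_(2*n+1) -> 'I_n)
    (beta xi : R) (V0 : {set 'I_(2*n+1)}) (D0 : {set 'I_n}) : Prop :=
  forall (C Cbar : {set 'I_n}) (X Vbar Z : {set 'I_(2*n+1)}),
    (#|Cbar|%:R <= beta * n%:R) -> (#|Vbar|%:R <= beta * n%:R) ->
    (#|C| <= 100)%N -> [disjoint X & Z] -> replete col (xi * n%:R) X Z ->
    exists (X' : {set 'I_(2*n+1)}) (C' : {set 'I_n}) (V' : {set 'I_(2*n+1)}),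
      [/\ X' \subset X :\: Vbar, C' \subset D0 :\: Cbar,
          V' \subset (V0 :|: Z) :\: Vbar,
          [/\ #|X'| = #|C|, #|C'| = (#|C| - 1)%N & (#|V'| <= 3 * #|C|)%N] &
          (forall c, c \in C -> has_perfect_rainbow_matching col (c |: C') X' V')].

(* Main.v *)
Require Import Defs.
From HB Require Import structures.
From mathcomp Require Import all_boot all_order all_algebra.
From mathcomp Require Import reals.
From mathcomp Require Import lra ring zify.
Import Order.TTheory GRing.Theory Num.Theory.
Set Implicit Arguments. Unset Strict Implicit. Unset Printing Implicit Defensive.
Local Open Scope ring_scope.

Lemma card_setU_le (T : finType) (A B : {set T}) : (#|A :|: B| <= #|A| + #|B|)%N.
Proof. by rewrite cardsU leq_subr. Qed.

Section Prob.
Variable R : realType.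

Lemma rw_ge0 (T : finType) (q : R) (S : {set T}) : 0 <= q -> q <= 1 -> 0 <= rand_weight q S.
Proof.
move=> q0 q1; rewrite /rand_weight; apply: prodr_ge0 => t _.
by case: (t \in S) => //; rewrite subr_ge0.
Qed.

Lemma prod_ind_sub (T : finType) (A J : {set T}) :
  \prod_(i : T) (if i \in J then 1 else (i \notin A)%:R) = (A \subset J)%:R :> R.
Proof.
case: (boolP (A \subset J)) => sAJ.
  rewrite big1 // => i _; case: ifP => // iJ.
  by have -> : i \notin A by apply/negP => /(subsetP sAJ); rewrite iJ.
have [i iA iJ] : exists2 i, i \in A & i \notin J.
  by move/subsetPn: sAJ => [i ? ?]; exists i.
by rewrite (bigD1 i) //= (negbTE iJ) iA mul0r.
Qed.

Lemma rw_sub (T : finType) (q : R) (A : {set T}) :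
  \sum_(S : {set T}) rand_weight q S * (A \subset S)%:R = q ^+ #|A|.
Proof.
have H : \prod_(t : T) (q + (1 - q) * (t \notin A)%:R) = q ^+ #|A|.
  rewrite (bigID (mem A)) /= [X in _ * X]big1 ?mulr1.
    by rewrite -prodr_const; apply: eq_bigr => i ->; rewrite mulr0 addr0.
  by move=> i /negbTE ->; rewrite mulr1 addrC subrK.
rewrite -H bigA_distr; apply: eq_bigr => J _.
rewrite /rand_weight -prod_ind_sub -big_split /=; apply: eq_bigr => i _.
by case: (i \in J); rewrite ?mulr1.
Qed.

Lemma rw_sum1 (T : finType) (q : R) : \sum_(S : {set T}) rand_weight q S = 1.
Proof.
by rewrite -(expr0 q) -(cards0 T) -(rw_sub q set0); apply: eq_bigr => S _; rewrite sub0set mulr1.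
Qed.

Section EE.
Variables (T1 T2 : finType) (mu : R).
Hypotheses (mu0 : 0 <= mu) (mu1 : mu <= 1).

Definition wt (p : {set T1} * {set T2}) := rand_weight mu p.1 * rand_weight mu p.2.
Definition EE (f : {set T1} * {set T2} -> R) := \sum_p wt p * f p.

Lemma wt_ge0 p : 0 <= wt p.
Proof. by rewrite /wt mulr_ge0 // rw_ge0. Qed.

Lemma EE_sub (A : {set T1}) (B : {set T2}) :
  EE (fun p => ((A \subset p.1) && (B \subset p.2))%:R) = mu ^+ #|A| * mu ^+ #|B|.
Proof.
rewrite /EE.
have -> : \sum_p wt p * ((A \subset p.1) && (B \subset p.2))%:R =
  \sum_i \sum_j wt (i, j) * ((A \subset (i, j).1) && (B \subset (i, j).2))%:R.
  by rewrite pair_bigA; apply: eq_bigr => -[i j].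
rewrite -(rw_sub mu A) -(rw_sub mu B) big_distrl /=.
apply: eq_bigr => i _; rewrite big_distrr /=; apply: eq_bigr => j _.
by rewrite /wt /= -mulnb natrM; ring.
Qed.

Lemma EE_const c : EE (fun _ => c) = c.
Proof.
have := EE_sub set0 set0; rewrite !cards0 !expr0 mulr1 /EE.
under eq_bigr do rewrite !sub0set mulr1.
by move=> H; rewrite -big_distrl /= H mul1r.
Qed.

Lemma EE_add f g : EE (fun p => f p + g p) = EE f + EE g.
Proof. by rewrite /EE -big_split; apply: eq_bigr => p _; rewrite mulrDr. Qed.

Lemma EE_scale c f : EE (fun p => c * f p) = c * EE f.
Proof. by rewrite /EE mulr_sumr; apply: eq_bigr => p _; rewrite mulrCA. Qed.

Lemma EE_sum (I : finType) (F : I -> {set T1} * {set T2} -> R) :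
  EE (fun p => \sum_i F i p) = \sum_i EE (F i).
Proof.
rewrite /EE exchange_big /=; apply: eq_bigr => p _; by rewrite mulr_sumr.
Qed.

Lemma EE_le f g : (forall p, f p <= g p) -> EE f <= EE g.
Proof. by move=> H; apply: ler_sum => p _; apply: ler_wpM2l; [exact: wt_ge0|]. Qed.

Lemma EE_ge0 f : (forall p, 0 <= f p) -> 0 <= EE f.
Proof. by move=> H; apply: sumr_ge0 => p _; rewrite mulr_ge0 // wt_ge0. Qed.

End EE.
End Prob.

Section Graph.
Variables (n : nat) (col : 'I_(2*n+1) -> 'I_(2*n+1) -> 'I_n).

Definition Nb (v : 'I_(2*n+1)) (d : 'I_n) := [set u | (u != v) && (col v u == d)].
Definition Ud h x d := Nb h d :|: Nb x d.
Definition ind h x d (p : {set 'I_(2*n+1)} * {set 'I_n}) : bool :=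
  (Ud h x d \subset p.1) && ([set d] \subset p.2).
Definition goodset h x p := [set d | ind h x d p].

Hypothesis tf : two_factorization col.

Lemma Nb_card v d : #|Nb v d| = 2%N.
Proof. by case: tf => _ ->. Qed.

Lemma Ud_card h x d : (#|Ud h x d| <= 4)%N.
Proof. by apply: leq_trans (card_setU_le _ _) _; rewrite !Nb_card. Qed.

Lemma Ud_n0 h x d : Ud h x d != set0.
Proof.
apply/negP => /eqP E; have := Nb_card h d.
have -> : Nb h d = set0 by apply/eqP; rewrite -subset0 -E subsetUl.
by rewrite cards0.
Qed.

Lemma overlap_card h x d :
  (#|[set d' | ~~ [disjoint Ud h x d & Ud h x d']]| <= 8)%N.
Proof.
have sub : [set d' | ~~ [disjoint Ud h x d & Ud h x d']] \subset
   [set col h v | v in Ud h x d] :|: [set col x v | v in Ud h x d].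
  apply/subsetP => d'; rewrite inE => /pred0Pn [v /andP [v1 v2]].
  move: v2; rewrite !inE => /orP [] /andP [_ /eqP <-].
    by rewrite imset_f.
  by rewrite orbC imset_f.
apply: leq_trans (subset_leq_card sub) _.
apply: leq_trans (card_setU_le _ _) _.
apply: leq_trans (leq_add (leq_imset_card _ _) (leq_imset_card _ _)) _.
by have := Ud_card h x d; lia.
Qed.


Section Cheb.
Variables (R : realType) (mu : R) (h x : 'I_(2*n+1)).
Hypotheses (mu0 : 0 < mu) (mu1 : mu <= 1).
Let mu0' : 0 <= mu. Proof. exact: ltW. Qed.

Local Notation E := (@EE R 'I_(2*n+1) 'I_n mu).
Definition Ind d p : R := (ind h x d p)%:R.

Lemma EE_ext f g : (forall p, f p = g p) -> E f = E g.
Proof. by move=> H; apply: eq_bigr => p _; rewrite H. Qed.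

Lemma E_ind d : E (Ind d) = mu ^+ #|Ud h x d| * mu.
Proof. by have := @EE_sub R _ _ mu (Ud h x d) [set d]; rewrite cards1 expr1 => <-. Qed.

Lemma E_ind2 d d' : E (fun p => Ind d p * Ind d' p) =
   mu ^+ #|Ud h x d :|: Ud h x d'| * mu ^+ #|[set d; d']|.
Proof.
rewrite -EE_sub; apply: EE_ext => p; rewrite /Ind -natrM mulnb /ind.
by rewrite subUset subUset; case: (_ \subset _); case: (_ \subset _);
  case: (_ \subset _); case: (_ \subset _).
Qed.

Lemma EE_cov f g a b : E f = a -> E g = b ->
  E (fun p => (f p - a) * (g p - b)) = E (fun p => f p * g p) - a * b.
Proof.
move=> Ef Eg.
rewrite (EE_ext (g := fun p => f p * g p + ((- b) * f p + ((- a) * g p + a * b)))); last first.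
  by move=> p; ring.
by rewrite !EE_add !EE_scale EE_const Ef Eg; ring.
Qed.

Lemma cov_le d d' : E (fun p => Ind d p * Ind d' p) - E (Ind d) * E (Ind d')
   <= (~~ [disjoint Ud h x d & Ud h x d'])%:R.
Proof.
have ge0 : 0 <= E (Ind d) * E (Ind d') by rewrite !E_ind mulr_ge0 // mulr_ge0 // exprn_ge0.
case: (boolP [disjoint Ud h x d & Ud h x d']) => dis /=; last first.
  rewrite E_ind2.
  have t1 : mu ^+ #|Ud h x d :|: Ud h x d'| * mu ^+ #|[set d; d']| <= 1.
    by rewrite mulr_ile1 ?exprn_ile1 ?exprn_ge0.
  move: t1 ge0; set t := _ * _; set u := _ * _; lra.
have dd : d != d'.
  apply/negP => /eqP E'; move: dis; rewrite -E' -setI_eq0 setIid.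
  by rewrite (negbTE (Ud_n0 _ _ _)).
rewrite E_ind2 !E_ind cards2 dd cardsU (disjoint_setI0 dis) cards0 subn0 exprD.
rewrite (_ : mu ^+ 2 = mu * mu) ?expr2 //; set a := mu ^+ _; set b := mu ^+ _.
have -> : a * b * (mu * mu) - a * mu * (b * mu) = 0 by ring.
by [].
Qed.

Definition Sg p : R := \sum_d Ind d p.
Definition aa : R := \sum_d E (Ind d).

Lemma Sg_card p : Sg p = #|goodset h x p|%:R.
Proof.
rewrite /Sg -sum1_card natr_sum [RHS]big_mkcond; apply: eq_bigr => d _ /=.
by rewrite inE /Ind; case: ind.
Qed.

Lemma var_le : E (fun p => (Sg p - aa) ^+ 2) <= (8 * n)%:R.
Proof.
have H : forall p, (Sg p - aa) ^+ 2 =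
  \sum_d \sum_d' (Ind d p - E (Ind d)) * (Ind d' p - E (Ind d')).
  move=> p; rewrite /Sg /aa -sumrB expr2 big_distrl; apply: eq_bigr => d _.
  by rewrite big_distrr.
rewrite (EE_ext H) EE_sum.
apply: le_trans (_ : _ <= \sum_(d : 'I_n) 8%:R) _; last first.
  by rewrite sumr_const card_ord natrM mulr_natr.
apply: ler_sum => d _; rewrite EE_sum.
apply: le_trans (_ : _ <= \sum_d' (~~ [disjoint Ud h x d & Ud h x d'])%:R) _.
  by apply: ler_sum => d' _; rewrite EE_cov //; apply: cov_le.
rewrite -natr_sum ler_nat.
apply: leq_trans (overlap_card h x d).
rewrite -sum1_card [X in (_ <= X)%N]big_mkcond /=; apply: leq_sum => d' _; rewrite inE; case: (~~ _); by [].
Qed.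

Definition badp p : bool := (h != x) && (#|goodset h x p|%:R < n%:R * mu ^+ 5 / 2).

Lemma aa_ge : n%:R * mu ^+ 5 <= aa.
Proof.
apply: le_trans (_ : _ <= \sum_(d : 'I_n) mu ^+ 4 * mu) _.
  by rewrite sumr_const card_ord -exprSr mulr_natl.
apply: ler_sum => d _; rewrite E_ind ler_wpM2r //.
by apply: ler_wiXn2l => //; apply: Ud_card.
Qed.

Lemma E_bad : (0 < n)%N -> E (fun p => (badp p)%:R) <= 32 / (n%:R * mu ^+ 10).
Proof.
move=> n0.
have nR : 0 < n%:R :> R by rewrite ltr0n.
have c0 : 0 < n%:R * mu ^+ 5 by rewrite mulr_gt0 // exprn_gt0.
have ac := aa_ge.
have pw : forall p, (aa / 2) ^+ 2 * (badp p)%:R <= (Sg p - aa) ^+ 2.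
  move=> p; case: (boolP (badp p)) => [/andP [_ lt] | _]; last by rewrite mulr0 sqr_ge0.
  rewrite mulr1; rewrite -Sg_card in lt.
  have S0 : 0 <= Sg p by rewrite Sg_card ler0n.
  nra.
have := EE_le mu0' mu1 pw; rewrite EE_scale => H1.
have H2 := le_trans H1 var_le.
have B0 : 0 <= E (fun p => (badp p)%:R) by apply: EE_ge0 => // p; rewrite ler0n.
move: H2 B0; set B := E _ => H2 B0.
rewrite ler_pdivlMr; last by rewrite mulr_gt0 // exprn_gt0.
have e10 : mu ^+ 10 = mu ^+ 5 * mu ^+ 5 by rewrite -exprD.
rewrite e10; move: H2; rewrite natrM => H2.
have H3 : B * (n%:R * mu ^+ 5) ^+ 2 <= 32 * n%:R.
  apply: le_trans (_ : B * (aa ^+ 2) <= _).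
    by rewrite ler_wpM2l // ler_sqr // ?nnegrE ltW // (lt_le_trans c0).
  nra.
set m5 := mu ^+ 5 in H3 c0 *; set N := n%:R in H3 nR c0 *.
have : N * (B * (N * (m5 * m5))) <= N * 32 by nra.
by rewrite ler_pM2l.
Qed.

End Cheb.

Definition nbad (R : realType) (mu : R) p : nat := \sum_h \sum_x badp mu h x p.

Lemma E_nbad (R : realType) (mu : R) : 0 < mu -> mu <= 1 -> (0 < n)%N ->
  EE mu (fun p => (nbad mu p)%:R) <= (2 * n + 1)%:R ^+ 2 * (32 / (n%:R * mu ^+ 10)).
Proof.
move=> mu0 mu1 n0; rewrite /nbad.
have -> : EE mu (fun p => (\sum_h \sum_x badp mu h x p)%:R) =
   EE mu (fun p => \sum_h \sum_x (badp mu h x p)%:R).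
  apply: eq_bigr => p _; rewrite natr_sum; congr (_ * _).
  by apply: eq_bigr => h _; rewrite natr_sum.
rewrite EE_sum.
apply: le_trans (_ : _ <= \sum_(h : 'I_(2*n+1)) \sum_(x : 'I_(2*n+1)) (32 / (n%:R * mu ^+ 10))) _.
  apply: ler_sum => h _; rewrite EE_sum; apply: ler_sum => x _.
  exact: E_bad.
rewrite !sumr_const card_ord.
have nat2 : forall (c : R) k, c *+ k *+ k = k%:R ^+ 2 * c.
  by move=> c k; rewrite -mulrnA expr2 -natrM mulr_natl.
by rewrite nat2.
Qed.
End Graph.

Lemma markov (R : realType) (T1 T2 : finType) (mu : R) (f : {set T1} * {set T2} -> R) (t : R) :
  0 <= mu -> mu <= 1 -> 0 < t -> (forall p, 0 <= f p) ->
  \sum_(p in [set p | t < f p]) wt mu p <= EE mu f / t.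
Proof.
move=> mu0 mu1 t0 f0.
rewrite /EE mulr_suml (big_mkcond (fun p => p \in _)) /=.
apply: ler_sum => p _; rewrite inE.
have w0 := wt_ge0 mu0 mu1 p.
case: ifP => ft.
  rewrite -mulrA ler_peMr //.
  by rewrite ler_pdivlMr // mul1r ltW.
by rewrite -mulrA mulr_ge0 // divr_ge0 // ltW.
Qed.


Lemma card_pairs_le1 (T : finType) (A : {set T * T}) (W : {set T}) k :
  (forall e, e \in A -> e.1 \in W) -> (forall v, #|[set u | (v, u) \in A]| <= k)%N ->
  (#|A| <= #|W| * k)%N.
Proof.
move=> H1 H2.
have -> : #|A| = (\sum_v #|[set u | (v, u) \in A]|)%N.
  rewrite -sum1_card big_mkcond /=.
  have -> : (\sum_e (if e \in A then 1 else 0) = \sum_v \sum_u if (v, u) \in A then 1 else 0)%N.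
    by rewrite pair_bigA; apply: eq_bigr => -[i j].
  apply: eq_bigr => v _; rewrite -sum1_card [RHS]big_mkcond /=; apply: eq_bigr => u _.
  by rewrite inE.
rewrite (bigID (mem W)) /= [X in (_ + X)%N]big1 ?addn0.
  by rewrite -sum_nat_const; apply: leq_sum => v _.
move=> v vW; apply/eqP; rewrite cards_eq0; apply/eqP/setP => u; rewrite !inE.
by apply/negP => /H1 /= vW'; rewrite vW' in vW.
Qed.

Lemma card_pairs_le2 (T : finType) (A : {set T * T}) (W : {set T}) k :
  (forall e, e \in A -> e.2 \in W) -> (forall v, #|[set u | (u, v) \in A]| <= k)%N ->
  (#|A| <= #|W| * k)%N.
Proof.
move=> H1 H2.
have inj : injective (fun e : T * T => (e.2, e.1)) by move=> [a b] [c d] /= [-> ->].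
rewrite -(card_imset _ inj); apply: card_pairs_le1.
  by move=> e /imsetP [e' e'A ->] /=; apply: H1.
move=> v; apply: leq_trans (H2 v); apply: subset_leq_card; apply/subsetP => u.
rewrite !inE => /imsetP [[a b] abA [-> ->]] //.
Qed.

Lemma card_U3 (T : finType) (A1 A2 A3 : {set T}) :
  (#|A1 :|: A2 :|: A3| <= #|A1| + #|A2| + #|A3|)%N.
Proof.
have := card_setU_le (A1 :|: A2) A3; have := card_setU_le A1 A2; lia.
Qed.

Lemma card_U6 (T : finType) (A1 A2 A3 A4 A5 A6 : {set T}) :
  (#|A1 :|: A2 :|: A3 :|: A4 :|: A5 :|: A6| <= #|A1| + #|A2| + #|A3| + #|A4| + #|A5| + #|A6|)%N.
Proof.
have := card_setU_le (A1 :|: A2 :|: A3 :|: A4 :|: A5) A6.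
have := card_setU_le (A1 :|: A2 :|: A3 :|: A4) A5.
have := card_setU_le (A1 :|: A2 :|: A3) A4.
have := card_U3 A1 A2 A3.
lia.
Qed.

Lemma arith_Ex (a b c1 g e f F Vb : nat) : (a <= 100 -> c1 <= 99 -> g <= 1 -> e <= F -> f <= F ->
  F <= Vb + 398 + 2 -> a + b + c1 + g + e + f <= 1000 + b + 2 * Vb)%N.
Proof. lia. Qed.

Lemma arith_S (c s : nat) : (c <= 100 -> s <= c.-1 -> 4 * s + 2 <= 398)%N.
Proof. lia. Qed.

Lemma arith_V (c k : nat) : (0 < c -> k <= 3 * (c - 1) + 1 -> k <= 3 * c)%N.
Proof. lia. Qed.

Section Det.
Variables (R : realType) (n : nat) (col : 'I_(2*n+1) -> 'I_(2*n+1) -> 'I_n).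
Hypothesis tf : two_factorization col.
Variables (xi mu beta : R) (V0 : {set 'I_(2*n+1)}) (D0 : {set 'I_n}).
Hypotheses (Hxi : 0 < xi) (Hmu0 : 0 < mu) (Hmu1 : mu <= 1)
  (Hbx : beta <= xi / 64) (Hbm : beta <= mu ^+ 5 / 64) (Hn : (0 < n)%N)
  (Hxn : 4000 <= xi * n%:R) (Hmn : 4000 <= mu ^+ 5 * n%:R)
  (Hnb : (nbad col mu (V0, D0))%:R <= xi ^+ 2 / 128 * n%:R ^+ 2).

Variables (C Cbar : {set 'I_n}) (X Vbar Z : {set 'I_(2*n+1)}).
Hypotheses (HCb : #|Cbar|%:R <= beta * n%:R) (HVb : #|Vbar|%:R <= beta * n%:R)
  (HC : (#|C| <= 100)%N) (Hdis : [disjoint X & Z]) (Hrep : replete col (xi * n%:R) X Z).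

Local Notation V := 'I_(2*n+1).
Definition Pairs c := [set e : V * V | [&& e.1 \in X, e.2 \in Z, e.1 != e.2 & col e.1 e.2 == c]].

Lemma sym u v : u != v -> col u v = col v u.
Proof. by case: tf => S _; apply: S. Qed.

Lemma kill (W : {set V}) c :
  (#|[set e in Pairs c | (e.1 \in W) || (e.2 \in W)]| <= 4 * #|W|)%N.
Proof.
set A1 := [set e in Pairs c | e.1 \in W]; set A2 := [set e in Pairs c | e.2 \in W].
have sub : [set e in Pairs c | (e.1 \in W) || (e.2 \in W)] \subset A1 :|: A2.
  by apply/subsetP => e; rewrite !inE; case/andP => -> /orP [] ->; rewrite ?orbT.
apply: leq_trans (subset_leq_card sub) _; apply: leq_trans (card_setU_le _ _) _.
have b1 : (#|A1| <= #|W| * 2)%N.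
  apply: card_pairs_le1; first by move=> e; rewrite inE => /andP [].
  move=> v; apply: leq_trans (_ : _ <= #|Nb col v c|)%N _; last by rewrite (Nb_card tf).
  apply: subset_leq_card; apply/subsetP => u.
  rewrite !inE /= => /andP [/and4P [_ _ ne /eqP <-] _]; by rewrite eq_sym ne eqxx.
have b2 : (#|A2| <= #|W| * 2)%N.
  apply: card_pairs_le2; first by move=> e; rewrite inE => /andP [].
  move=> v; apply: leq_trans (_ : _ <= #|Nb col v c|)%N _; last by rewrite (Nb_card tf).
  apply: subset_leq_card; apply/subsetP => u.
  rewrite !inE /= => /andP [/and4P [_ _ ne /eqP <-] _]; by rewrite ne (sym ne) eqxx.
apply: leq_trans (leq_add b1 b2) _; rewrite -mulnDr mulnC; exact: leqnn.
Qed.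

Lemma pick_pair (W : {set V}) c : 4 * #|W|%:R < xi * n%:R ->
  exists x z, [/\ (x, z) \in Pairs c, x \notin W & z \notin W].
Proof.
move=> H.
have H2 : (4 * #|W| < #|Pairs c|)%N.
  rewrite -(ltr_nat R) natrM; apply: lt_le_trans H _.
  by have := Hrep c; rewrite /replete.
have : ~~ (Pairs c \subset [set e in Pairs c | (e.1 \in W) || (e.2 \in W)]).
  apply/negP => /subset_leq_card le; have := leq_trans le (kill W c).
  by rewrite leqNgt H2.
case/subsetPn => -[x z] xz; rewrite inE xz /= negb_or => /andP [xW zW].
by exists x, z.
Qed.

Definition BP h := [set x | badp col mu h x (V0, D0)].
Definition Bh := [set h | xi * n%:R / 16 <= #|BP h|%:R].

Lemma nbad_BP : (nbad col mu (V0, D0))%:R = \sum_h #|BP h|%:R :> R.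
Proof.
rewrite /nbad natr_sum; apply: eq_bigr => h _; congr (_ %:R).
by rewrite -sum1_card [RHS]big_mkcond /=; apply: eq_bigr => x _; rewrite inE; case: badp.
Qed.

Lemma Bh_card : #|Bh|%:R <= xi * n%:R / 8.
Proof.
have t0 : 0 < xi * n%:R / 16 by rewrite divr_gt0 // mulr_gt0 // ltr0n.
have H : #|Bh|%:R * (xi * n%:R / 16) <= xi ^+ 2 / 128 * n%:R ^+ 2.
  apply: le_trans Hnb; rewrite nbad_BP.
  apply: le_trans (_ : \sum_(h in Bh) #|BP h|%:R <= _).
    have -> : #|Bh|%:R * (xi * n%:R / 16) = \sum_(h in Bh) (xi * n%:R / 16).
      by rewrite sumr_const; exact: mulr_natl.
    by apply: ler_sum => h; rewrite inE.
  by rewrite [X in _ <= X](bigID (mem Bh)) /= lerDl sumr_ge0 // => *; rewrite ler0n.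
have nR : 0 < n%:R :> R by rewrite ltr0n.
move: H t0; set b := #|Bh|%:R; set N := n%:R => H t0.
have : b * (xi * N / 16) <= (xi * N / 8) * (xi * N / 16).
  have E : xi ^+ 2 / 128 * N ^+ 2 = (xi * N / 8) * (xi * N / 16) by field.
  by rewrite -E.
by rewrite ler_pM2r.
Qed.


Lemma pick_h cm : exists h zm, [/\ (h, zm) \in Pairs cm, h \notin Vbar :|: Bh & zm \notin Vbar :|: Bh].
Proof.
have [x [z [? ? ?]]] : exists x z, [/\ (x, z) \in Pairs cm, x \notin Vbar :|: Bh & z \notin Vbar :|: Bh].
  apply: pick_pair.
  have c1 : (#|Vbar :|: Bh| <= #|Vbar| + #|Bh|)%N by apply: card_setU_le.
  have c2 : #|Vbar :|: Bh|%:R <= #|Vbar|%:R + #|Bh|%:R :> R by rewrite -natrD ler_nat.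
  have bn : beta * n%:R <= xi * n%:R / 64.
    by rewrite mulrAC ler_wpM2r // ler0n.
  have := Bh_card; move: c2 HVb bn Hxn.
  set a := #|_|%:R; set b := #|Vbar|%:R; set c := #|Bh|%:R; set d := xi * n%:R; set e := beta * _.
  lra.
by exists x, z.
Qed.

Definition o0 : 'I_4 := @Ordinal 4 0 isT.
Definition o1 : 'I_4 := @Ordinal 4 1 isT.
Definition o2 : 'I_4 := @Ordinal 4 2 isT.
Definition o3 : 'I_4 := @Ordinal 4 3 isT.

Section Build.
Variables (cm : 'I_n) (h zm : V).
Hypotheses (cmC : cm \in C) (hzm : (h, zm) \in Pairs cm) (hB : h \notin Vbar :|: Bh)
  (zmB : zm \notin Vbar :|: Bh).

Definition C0 := C :\ cm.
Definition Dom (S : {set 'I_n}) : {set 'I_n * 'I_4} := setX S setT :|: [set (cm, o0); (cm, o1)].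

Definition Inv S (f : 'I_n * 'I_4 -> V) (dd : 'I_n -> 'I_n) :=
 [/\ {in Dom S &, injective f}, f (cm, o0) = h /\ f (cm, o1) = zm,
  (forall c, c \in S -> [/\ f (c, o0) \in X :\: Vbar, f (c, o1) \in Z :\: Vbar,
       f (c, o2) \in V0 :\: Vbar & f (c, o3) \in V0 :\: Vbar]),
  (forall c, c \in S -> [/\ col (f (c, o0)) (f (c, o1)) = c, col h (f (c, o2)) = dd c,
       col (f (c, o0)) (f (c, o3)) = dd c, dd c \in D0 :\: Cbar & dd c \notin C]) &
  {in S &, injective dd}].

Lemma Dom_card S : (#|Dom S| <= 4 * #|S| + 2)%N.
Proof.
apply: leq_trans (card_setU_le _ _) _; rewrite cardsX cardsT card_ord cards2 mulnC.
by apply: leq_add => //; case: (_ != _).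
Qed.

Lemma inDom S q : (q \in Dom S) = (q.1 \in S) || (q \in [set (cm, o0); (cm, o1)]).
Proof. by case: q => a b; rewrite /Dom inE in_setX inE andbT. Qed.

Lemma C0card : (#|C0| = #|C| - 1)%N.
Proof. by rewrite /C0 (cardsD1 cm C) cmC add1n subn1. Qed.

Lemma step S f dd c : Inv S f dd -> S \subset C0 -> c \in C0 -> c \notin S ->
  exists f' dd', Inv (c |: S) f' dd'.
Proof.
move=> [finj [fh fzm] fmem fcol ddinj] SC0 cC0 cS.
have cmS : cm \notin S by apply/negP => /(subsetP SC0); rewrite /C0 !inE eqxx.
have ccm : c != cm by move: cC0; rewrite /C0 !inE => /andP [].
set Used := f @: Dom S.
have Ucard : (#|Used| <= 398)%N.
  apply: leq_trans (leq_imset_card _ _) _; apply: leq_trans (Dom_card S) _.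
  apply: (arith_S HC); rewrite -subn1 -C0card; exact: subset_leq_card.
have inU : forall q, q \in Dom S -> f q \in Used by move=> q qD; apply: imset_f.
have hU : h \in Used by rewrite -fh inU // inDom !inE eqxx orbT.
have BPh : #|BP h|%:R < xi * n%:R / 16.
  by move: hB; rewrite !inE negb_or => /andP [_]; rewrite -ltNge.
have bn : beta * n%:R <= xi * n%:R / 64 by rewrite mulrAC ler_wpM2r // ler0n.
have bm : beta * n%:R <= mu ^+ 5 * n%:R / 64 by rewrite mulrAC ler_wpM2r // ler0n.
have [x [z [xzP xW zW]]] : exists x z, [/\ (x, z) \in Pairs c,
    x \notin Vbar :|: Used :|: BP h & z \notin Vbar :|: Used :|: BP h].
  apply: pick_pair.
  have c1 := card_U3 Vbar Used (BP h).
  have c2 : #|Vbar :|: Used :|: BP h|%:R <= #|Vbar|%:R + #|Used|%:R + #|BP h|%:R :> R.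
    by rewrite -!natrD ler_nat.
  have c3 : #|Used|%:R <= 398 :> R by rewrite (ler_nat R _ 398).
  move: c2 c3 HVb bn Hxn BPh.
  set a := #|_ :|: _|%:R; set b := #|Vbar|%:R; set cc := #|Used|%:R; set dd0 := #|BP h|%:R.
  set e := xi * _; set g := beta * _.
  lra.
move: xW zW; rewrite !inE !negb_or => /andP [/andP [xV xU] xB] /andP [/andP [zV zU] _].
move: xzP; rewrite inE /= => /and4P [xX zZ xz /eqP cxz].
have hx : h != x by apply: contraNneq xU => <-.
have good : n%:R * mu ^+ 5 / 2 <= #|goodset col h x (V0, D0)|%:R.
  by move: xB; rewrite /badp hx /= -leNgt.
set F := Vbar :|: Used :|: [set x; z].
set Ex := C :|: Cbar :|: dd @: S :|: [set col h x] :|: col h @: F :|: col x @: F.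
have Excard : (#|Ex| <= 1000 + #|Cbar| + 2 * #|Vbar|)%N.
  apply: leq_trans (card_U6 _ _ _ _ _ _) _.
  have FF : (#|F| <= #|Vbar| + 398 + 2)%N.
    apply: leq_trans (card_U3 _ _ _) _.
    by rewrite leq_add // ?leq_add2l // cards2; case: (_ != _).
  apply: (@arith_Ex _ _ _ _ _ _ #|F|) => //.
  - apply: leq_trans (leq_imset_card _ _) _.
    apply: leq_trans (subset_leq_card SC0) _; rewrite C0card.
    by move: HC; case: #|C| => // k; rewrite /= subn1 /=.
  - by rewrite cards1.
  - exact: leq_imset_card.
  - exact: leq_imset_card.
have [d dG dE] : exists2 d, d \in goodset col h x (V0, D0) & d \notin Ex.
  have : ~~ (goodset col h x (V0, D0) \subset Ex).
    apply/negP => /subset_leq_card lec.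
    have le' : #|goodset col h x (V0, D0)|%:R <= #|Ex|%:R :> R by rewrite ler_nat; exact: lec.
    have e1 : #|Ex|%:R <= (1000 + #|Cbar| + 2 * #|Vbar|)%N%:R :> R.
      by rewrite ler_nat; exact: Excard.
    move: e1; rewrite !natrD => e1.
    move: le' e1 good HCb HVb bm Hmn.
    rewrite [n%:R * _]mulrC.
    set a := #|goodset _ _ _ _|%:R; set b := #|Ex|%:R; set cb := #|Cbar|%:R.
    set vb := #|Vbar|%:R; set g := beta * _; set m5 := mu ^+ 5 * _.
    lra.
  by case/subsetPn => d ? ?; exists d.
move: dG; rewrite inE /ind /= => /andP [UV0]; rewrite sub1set => dD0.
move: dE; rewrite !inE => /norP [/norP [/norP [/norP [/norP [dC dCb] dS] dhx] dhF] dxF].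
have [u uN] : exists u, u \in Nb col h d.
  by apply/set0Pn; rewrite -card_gt0 (Nb_card tf).
have [w wN] : exists w, w \in Nb col x d :\ u.
  apply/set0Pn; rewrite -card_gt0; have := cardsD1 u (Nb col x d); rewrite (Nb_card tf).
  move=> E; rewrite lt0n; apply/negP => /eqP k0; move: E; rewrite k0 addn0.
  by case: (u \in _).
move: wN; rewrite in_setD1 => /andP [wu wN].
have uV0 : u \in V0 by apply: (subsetP UV0); rewrite /Ud inE uN.
have wV0 : w \in V0 by apply: (subsetP UV0); rewrite /Ud inE wN orbT.
move: uN wN; rewrite !inE => /andP [uh /eqP chu] /andP [wx /eqP cxw].
have uF : u \notin F.
  apply/negP => uF; have := imset_f (col h) uF; rewrite chu => H.
  by rewrite H in dhF.
have wF : w \notin F.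
  apply/negP => wF; have := imset_f (col x) wF; rewrite cxw => H.
  by rewrite H in dxF.
have ux : u != x by apply: contraNneq dhx => E; rewrite -chu E.
have wh : w != h.
  apply: contraNneq dhx => E; rewrite -cxw E sym //; by rewrite eq_sym.
move: uF wF; rewrite !inE !negb_or => /andP [/andP [uV uU] /andP [_ uz]] /andP [/andP [wV wU] /andP [wx' wz]].
set s := [:: x; z; u; w].
have us : uniq s.
  rewrite /s /= !inE !negb_or xz (eq_sym x u) ux (eq_sym x w) wx'.
  by rewrite (eq_sym z u) uz (eq_sym z w) wz (eq_sym u w) wu.
have sU : forall i : 'I_4, nth x s i \notin Used.
  move=> [[|[|[|[|k]]]] Hk] //=.
set f' := fun q : 'I_n * 'I_4 => if q.1 == c then nth x s q.2 else f q.
set dd' := fun e => if e == c then d else dd e.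
have cmc : (cm == c) = false by apply/negbTE; rewrite eq_sym.
exists f', dd'; split.
- have Dnew : forall q, q \in Dom (c |: S) -> (q.1 == c) || (q \in Dom S).
    by move=> [a b]; rewrite !inDom /= in_setU1 -orbA.
  move=> q q' /Dnew Hq /Dnew Hq'; rewrite /f'.
  case: (eqVneq q.1 c) Hq => [qc _ | qc /= qD]; case: (eqVneq q'.1 c) Hq' => [q'c _ | q'c /= q'D].
  + move/eqP; rewrite nth_uniq ?size_tuple // => /eqP E.
    by case: q q' qc q'c E => [a b] [a' b'] /= -> -> /val_inj ->.
  + by move=> E; have := sU q.2; rewrite E inU.
  + by move=> E; have := sU q'.2; rewrite -E inU.
  + exact: finj.
- by rewrite /f' /= cmc fh fzm.
- move=> c'; rewrite in_setU1 => /orP [/eqP -> | c'S].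
    by rewrite /f' /= eqxx /= !inE xV xX zV zZ uV uV0 wV wV0.
  have c'c : (c' == c) = false by apply/negbTE; apply: contraNneq cS => <-.
  by rewrite /f' /= c'c; apply: fmem.
- move=> c'; rewrite in_setU1 => /orP [/eqP -> | c'S].
    by rewrite /f' /dd' /= eqxx /= cxz chu cxw !inE dCb dD0 dC.
  have c'c : (c' == c) = false by apply/negbTE; apply: contraNneq cS => <-.
  by rewrite /f' /dd' /= c'c; apply: fcol.
- move=> a b; rewrite !in_setU1 /dd' => /orP [/eqP -> | aS] /orP [/eqP -> | bS] //.
  + rewrite eqxx; have -> : (b == c) = false by apply/negbTE; apply: contraNneq cS => <-.
    by move=> E; move: dS; rewrite E imset_f.
  + rewrite eqxx; have -> : (a == c) = false by apply/negbTE; apply: contraNneq cS => <-.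
    by move=> E; move: dS; rewrite -E imset_f.
  + have -> : (a == c) = false by apply/negbTE; apply: contraNneq cS => <-.
    have -> : (b == c) = false by apply/negbTE; apply: contraNneq cS => <-.
    exact: ddinj.
Qed.

Lemma build k : forall S : {set 'I_n}, S \subset C0 -> #|S| = k -> exists f dd, Inv S f dd.
Proof.
move: hzm; rewrite inE /= => /and4P [hX zmZ hzm' /eqP chzm].
elim: k => [|k IH] S SC0 Sk.
  move/cards0_eq: Sk => ->.
  exists (fun q => if q.2 == o0 then h else zm), id; split.
  - move=> q q'; rewrite !inDom !inE /= => /orP [/eqP -> | /eqP ->] /orP [/eqP -> | /eqP ->] //=.
      by move=> E; rewrite E eqxx in hzm'.
    by move=> E; rewrite E eqxx in hzm'.
  - by [].
  - by move=> c; rewrite inE.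
  - by move=> c; rewrite inE.
  - by move=> c; rewrite inE.
have [c cS] : exists c, c \in S by apply/set0Pn; rewrite -card_gt0 Sk.
have Sk' : #|S :\ c| = k by move: Sk; rewrite (cardsD1 c S) cS add1n => -[].
have [f [dd I]] := IH (S :\ c) (subset_trans (subD1set S c) SC0) Sk'.
have cS' : c \notin S :\ c by rewrite !inE eqxx.
have := step I (subset_trans (subD1set S c) SC0) (subsetP SC0 c cS) cS'.
by rewrite setD1K.
Qed.

Lemma assemble f dd : Inv C0 f dd ->
  exists (X' : {set V}) (C' : {set 'I_n}) (V' : {set V}),
      [/\ X' \subset X :\: Vbar, C' \subset D0 :\: Cbar,
          V' \subset (V0 :|: Z) :\: Vbar,
          [/\ #|X'| = #|C|, #|C'| = (#|C| - 1)%N & (#|V'| <= 3 * #|C|)%N] &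
          (forall c, c \in C -> has_perfect_rainbow_matching col (c |: C') X' V')].
Proof.
move: hzm; rewrite inE /= => /and4P [hX zmZ hzm' /eqP chzm].
move: hB zmB; rewrite !inE !negb_or => /andP [hV _] /andP [zmV _].
move=> [finj [fh fzm] fmem fcol ddinj].
have CC0 : forall c, c \in C -> (c == cm) || (c \in C0).
  by move=> c cC; rewrite /C0 !inE cC andbT; case: (c == cm).
have C0C : forall c, c \in C0 -> c \in C by move=> c; rewrite !inE => /andP [].
have C0n : forall c, c \in C0 -> c != cm by move=> c; rewrite !inE => /andP [].
have inD0 : forall c, c \in C -> (c, o0) \in Dom C0.
  move=> c /CC0 /orP [/eqP -> | cC0]; rewrite inDom /= ?cC0 //.
  by rewrite !inE !eqxx orbT.
have fX : forall c, c \in C -> f (c, o0) \in X :\: Vbar.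
  move=> c /CC0 /orP [/eqP -> | cC0]; first by rewrite fh !inE hV hX.
  by case: (fmem c cC0).
pose X' := [set f (c, o0) | c in C].
pose C' := dd @: C0.
pose P := [pred q | (q \in Dom C0) && (q.2 != o0)].
pose V' := [set f q | q in P].
exists X', C', V'; split.
- by apply/subsetP => v /imsetP [c cC ->]; apply: fX.
- apply/subsetP => e /imsetP [c cC0 ->]; by case: (fcol c cC0).
- apply/subsetP => v /imsetP [[a b] /andP [qD qb] ->].
  move: qD; rewrite inDom /= => /orP [aC0 | ].
    case: (fmem a aC0) => m0 m1 m2 m3.
    have : [\/ b = o1, b = o2 | b = o3].
      move: qb; case: b => [[|[|[|[|k]]]] Hb] // _.
      + by constructor 1; apply: val_inj.
      + by constructor 2; apply: val_inj.
      + by constructor 3; apply: val_inj.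
    case=> ->.
    + by move: m1; rewrite !inE => /andP [-> ->]; rewrite orbT.
    + by move: m2; rewrite !inE => /andP [-> ->].
    + by move: m3; rewrite !inE => /andP [-> ->].
  rewrite !inE => /orP [/eqP [_ E] | /eqP [-> ->]]; first by rewrite E in qb.
  by rewrite fzm zmV zmZ orbT.
- split.
  + rewrite card_in_imset // => c c' cC c'C E.
    by have := finj _ _ (inD0 c cC) (inD0 c' c'C) E => -[].
  + by rewrite card_in_imset // C0card.
  + apply: arith_V; first by rewrite card_gt0; apply/set0Pn; exists cm.
    rewrite -C0card; apply: leq_trans (leq_imset_card _ _) _.
    have sub : [set q in P] \subset setX C0 [set~ o0] :|: [set (cm, o1)].
      apply/subsetP => -[a b]; rewrite inE /= => /andP [qD qb].
      move: qD; rewrite inDom /= => /orP [aC0 | ]; first by rewrite in_setU in_setX aC0 /= in_setC1 qb.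
      rewrite !inE => /orP [/eqP [_ E] | /eqP ->]; first by rewrite E in qb.
      by rewrite eqxx orbT.
    have := subset_leq_card sub; rewrite cardsE => H1; apply: leq_trans H1 _.
    apply: leq_trans (card_setU_le _ _) _.
    by rewrite cardsX cardsC1 card_ord cards1 mulnC.
move=> c0 c0C.
pose sig c := if c == c0 then (c, o1) else if c == cm then (c0, o2) else (c, o3).
pose kap c := if c == c0 then c0 else if c == cm then dd c0 else dd c.
have c0cm : c0 != cm -> c0 \in C0 by move=> ne; rewrite !inE ne c0C.
have sigD : forall c, c \in C -> sig c \in Dom C0.
  move=> c cC; rewrite /sig; case: (eqVneq c c0) => [-> | cc0].
    case: (eqVneq c0 cm) => [-> | ne]; first by rewrite inDom /= in_set2 eqxx !orbT.
    by rewrite inDom /= c0cm.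
  case: (eqVneq c cm) => [E | ne].
    by rewrite inDom /= c0cm //; rewrite -E eq_sym.
  by rewrite inDom /= !inE ne cC.
have sig2 : forall c, (sig c).2 != o0.
  by move=> c; rewrite /sig; case: (c == c0) => //; case: (c == cm).
have kapE : forall c, c \in C -> col (f (c, o0)) (f (sig c)) = kap c.
  move=> c cC; rewrite /sig /kap; case: (eqVneq c c0) => [-> | cc0].
    case: (eqVneq c0 cm) => [-> | ne]; first by rewrite fh fzm.
    by case: (fcol c0 (c0cm ne)).
  case: (eqVneq c cm) => [E | ne].
    rewrite E fh; case: (fcol c0 (c0cm _)) => //; by rewrite -E eq_sym.
  have cC0 : c \in C0 by rewrite !inE ne cC.
  by case: (fcol c cC0).
have sig_inj : forall c c', sig c = sig c' -> c = c'.
  move=> c c' E; move: (congr1 (fun q => val q.2) E) (congr1 fst E); rewrite /sig /=.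
  case: (eqVneq c c0) => [a1|a1]; case: (eqVneq c' c0) => [a2|a2] /=;
  case: (eqVneq c cm) => [b1|b1]; case: (eqVneq c' cm) => [b2|b2] //=.
  all: try by rewrite a1 a2.
  all: try by rewrite b1 b2.
  all: try by move=> _ ->.
have s0 : forall c c', (c, o0) != sig c'.
  move=> c c'; apply/eqP => /(congr1 snd) E; have := sig2 c'; by rewrite -E eqxx.
have neqf : forall q q', q \in Dom C0 -> q' \in Dom C0 -> q != q' -> f q != f q'.
  by move=> q q' qD q'D ne; apply: contra_neq ne; apply: finj.
have kapnC : forall c, c \in C -> c != c0 -> kap c \notin C.
  move=> c cC cc0; rewrite /kap (negbTE cc0).
  case: (eqVneq c cm) => [E | ne].
    by case: (fcol c0 (c0cm _)) => //; rewrite -E eq_sym.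
  have cC0 : c \in C0 by rewrite !inE ne cC.
  by case: (fcol c cC0).
have kapC' : forall c, c \in C -> c != c0 -> kap c \in C'.
  move=> c cC cc0; rewrite /kap (negbTE cc0).
  case: (eqVneq c cm) => [E | ne].
    by apply: imset_f; apply: c0cm; rewrite -E eq_sym.
  by apply: imset_f; rewrite !inE ne cC.
have kapinj : forall c c', c \in C -> c' \in C -> kap c = kap c' -> c = c'.
  move=> c c' cC c'C.
  case: (eqVneq c c0) => [a1|a1]; case: (eqVneq c' c0) => [a2|a2].
  - by rewrite a1 a2.
  - by move=> E; have := kapnC c' c'C a2; rewrite -E /kap a1 eqxx c0C.
  - by move=> E; have := kapnC c cC a1; rewrite E /kap a2 eqxx c0C.
  move=> E.
  have dcC0 : forall e, e \in C -> e != c0 -> (if e == cm then c0 else e) \in C0.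
    move=> e eC ec0; case: (eqVneq e cm) => [E'|ne].
      by apply: c0cm; rewrite -E' eq_sym.
    by rewrite !inE ne eC.
  have kdd : forall e, e != c0 -> kap e = dd (if e == cm then c0 else e).
    by move=> e ec0; rewrite /kap (negbTE ec0); case: (e == cm).
  move: E; rewrite !kdd // => E.
  have := ddinj _ _ (dcC0 c cC a1) (dcC0 c' c'C a2) E.
  case: (eqVneq c cm) => [b1|b1]; case: (eqVneq c' cm) => [b2|b2] //.
  - by rewrite b1 b2.
  - by move=> E'; rewrite E' eqxx in a2.
  - by move=> E'; rewrite -E' eqxx in a1.
exists [set (f (c, o0), f (sig c)) | c in C]; split.
- move=> e /imsetP [c cC ->] /=; apply/and4P; split.
  + by apply: imset_f.
  + by apply/imsetP; exists (sig c) => //; rewrite inE /= sigD // sig2.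
  + by apply: neqf; rewrite ?inD0 ?sigD ?s0.
  + rewrite kapE //; case: (eqVneq c c0) => [E | ne].
      by rewrite /kap E eqxx setU11.
    by rewrite in_setU1 kapC' ?orbT.
- move=> e e' /imsetP [c cC ->] /imsetP [c' c'C ->] ne.
  have cc' : c != c' by apply: contra_neq ne => ->.
  have n1 : f (c, o0) != f (c', o0).
    by apply: neqf; rewrite ?inD0 //; apply: contra_neq cc' => -[].
  have n2 : f (c, o0) != f (sig c') by apply: neqf; rewrite ?inD0 ?sigD ?s0.
  have n3 : f (sig c) != f (c', o0) by apply: neqf; rewrite ?inD0 ?sigD // eq_sym s0.
  have n4 : f (sig c) != f (sig c').
    by apply: neqf; rewrite ?sigD //; apply: contra_neq cc'; apply: sig_inj.
  rewrite -setI_eq0; apply/eqP/setP => v; rewrite !inE /=.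
  apply/negP => /andP [/orP [] /eqP -> /orP [] /eqP E].
  + by move: n1; rewrite E eqxx.
  + by move: n2; rewrite E eqxx.
  + by move: n3; rewrite E eqxx.
  + by move: n4; rewrite E eqxx.
- move=> e e' /imsetP [c cC ->] /imsetP [c' c'C ->] /=.
  by rewrite !kapE // => /(kapinj _ _ cC c'C) ->.
- move=> v /imsetP [c cC ->]; exists (f (c, o0), f (sig c)); first by apply: imset_f.
  by rewrite eqxx.
Qed.

End Build.

Lemma det_concl : exists (X' : {set V}) (C' : {set 'I_n}) (V' : {set V}),
      [/\ X' \subset X :\: Vbar, C' \subset D0 :\: Cbar,
          V' \subset (V0 :|: Z) :\: Vbar,
          [/\ #|X'| = #|C|, #|C'| = (#|C| - 1)%N & (#|V'| <= 3 * #|C|)%N] &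
          (forall c, c \in C -> has_perfect_rainbow_matching col (c |: C') X' V')].
Proof.
have [-> | [cm cmC]] := set_0Vmem C.
  exists set0, set0, set0; split; rewrite ?sub0set ?cards0 //.
  by move=> c; rewrite inE.
have [h [zm [hzm hB zmB]]] := pick_h cm.
have [f [dd I]] : exists f dd, Inv cm h zm (C0 cm) f dd.
  by apply: build => //; apply: subxx.
by apply: assemble I.
Qed.
End Det.


Lemma params (R : realType) (xi mu beta : R) : 0 < xi -> 0 < mu -> mu <= 1 ->
  beta <= Num.min xi mu ^+ 64 / 64%:R -> beta <= xi / 64 /\ beta <= mu ^+ 5 / 64.
Proof.
move=> x0 m0 m1.
have d0 : 0 <= (64%:R : R)^-1 by rewrite invr_ge0 ler0n.
case: (ltrP xi mu) => H hb.
- have x1 : xi <= 1 by apply: le_trans (ltW H) m1.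
  split; apply: le_trans hb _; apply: ler_wpM2r => //.
    by rewrite -[X in _ <= X]expr1; apply: ler_wiXn2l => //; apply: ltW.
  apply: le_trans (_ : xi ^+ 5 <= _).
    by apply: ler_wiXn2l => //; apply: ltW.
  by apply: lerXn2r; rewrite ?nnegrE ?ltW.
- split; apply: le_trans hb _; apply: ler_wpM2r => //.
    apply: le_trans H; rewrite -[X in _ <= X]expr1.
    by apply: ler_wiXn2l => //; apply: ltW.
  by apply: ler_wiXn2l => //; apply: ltW.
Qed.

Lemma final_alg (R : realType) (N m x e : R) : 1 <= N -> 0 < m -> 0 < x -> 0 < e ->
  (9 * 4096) / (m * x * e) < N -> (2 * N + 1) ^+ 2 * (32 / (N * m)) <= e * (x / 128 * N ^+ 2).
Proof.
move=> N1 m0 x0 e0; rewrite ltr_pdivrMr ?mulr_gt0 // => H.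
have N0 : 0 < N by apply: lt_le_trans N1.
have -> : (2 * N + 1) ^+ 2 * (32 / (N * m)) = ((2 * N + 1) ^+ 2 * 32) / (N * m) by rewrite mulrA.
rewrite ler_pdivrMr ?mulr_gt0 //.
have h1 : (2 * N + 1) ^+ 2 <= 9 * N ^+ 2 by nra.
have -> : e * (x / 128 * N ^+ 2) * (N * m) = (N * (m * x * e)) * N ^+ 2 / 128 by field.
have h2 : (9 * 4096) * N ^+ 2 <= N * (m * x * e) * N ^+ 2.
  by rewrite ler_pM2r ?exprn_gt0 // ltW.
nra.
Qed.

Unset Implicit Arguments.
Theorem lemma4p1 (R : realType) :
  exists K : nat, (0 < K)%N /\
  forall xi mu beta : R, 0 < xi -> 0 < mu -> mu <= 1 -> 0 < beta ->
    beta <= (Num.min xi mu) ^+ K / K%:R ->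
    forall eps : R, 0 < eps ->
    exists n0 : nat, forall n : nat, (n0 <= n)%N ->
    forall col : 'I_(2*n+1) -> 'I_(2*n+1) -> 'I_n, two_factorization col ->
    exists B : {set {set 'I_(2*n+1)} * {set 'I_n}},
      \sum_(p in B) (rand_weight mu p.1 * rand_weight mu p.2) <= eps /\
      forall (V0 : {set 'I_(2*n+1)}) (D0 : {set 'I_n}),
        (V0, D0) \notin B -> good_event col beta xi V0 D0.
Proof.
exists 64%N; split => //.
move=> xi mu beta Hxi Hmu0 Hmu1 Hb0 Hbeta eps Heps.
have [Hbx Hbm] := params Hxi Hmu0 Hmu1 Hbeta.
have m5 : 0 < mu ^+ 5 by rewrite exprn_gt0.
set A := (9 * 4096) / (mu ^+ 10 * xi ^+ 2 * eps).
exists (Num.truncn (4000 / xi) + Num.truncn (4000 / mu ^+ 5) + Num.truncn A).+1.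
move=> n nn0 col tf.
have tr : forall y : R, (Num.truncn y < n)%N -> y < n%:R.
  move=> y yn; apply: lt_le_trans (truncnS_gt y) _; rewrite ler_nat; exact: yn.
have Hn : (0 < n)%N by apply: leq_trans nn0.
have N1 : 1 <= n%:R :> R by rewrite ler1n.
have ha : (Num.truncn (4000 / xi) <= Num.truncn (4000 / xi) + Num.truncn (4000 / mu ^+ 5) + Num.truncn A)%N.
  by rewrite -addnA leq_addr.
have hb : (Num.truncn (4000 / mu ^+ 5) <= Num.truncn (4000 / xi) + Num.truncn (4000 / mu ^+ 5) + Num.truncn A)%N.
  by rewrite addnAC leq_addl.
have hc : (Num.truncn A <= Num.truncn (4000 / xi) + Num.truncn (4000 / mu ^+ 5) + Num.truncn A)%N.
  by rewrite leq_addl.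
have Hxn : 4000 <= xi * n%:R.
  have := tr _ (leq_ltn_trans ha nn0).
  by rewrite ltr_pdivrMr // mulrC => /ltW.
have Hmn : 4000 <= mu ^+ 5 * n%:R.
  have := tr _ (leq_ltn_trans hb nn0).
  by rewrite ltr_pdivrMr // mulrC => /ltW.
have HA : A < n%:R := tr _ (leq_ltn_trans hc nn0).
exists [set p | xi ^+ 2 / 128 * n%:R ^+ 2 < (nbad col mu p)%:R]; split.
  have t0 : 0 < xi ^+ 2 / 128 * n%:R ^+ 2.
    by rewrite mulr_gt0 ?divr_gt0 ?exprn_gt0 ?ltr0n.
  apply: le_trans (markov (f := fun p => (nbad col mu p)%:R) _ _ t0 _) _.
  - exact: ltW.
  - exact: Hmu1.
  - by move=> p; rewrite ler0n.
  rewrite ler_pdivrMr //.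
  apply: le_trans (E_nbad tf Hmu0 Hmu1 Hn) _.
  rewrite natrD natrM.
  apply: final_alg => //; rewrite ?exprn_gt0 //.
move=> V0 D0; rewrite inE -leNgt => Hnb.
move=> C Cbar X Vbar Z HCb HVb HC Hdis Hrep.
exact: (det_concl tf Hxi Hbx Hbm Hn Hxn Hmn Hnb HCb HVb HC Hrep).
Qed.
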